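(* Let $m,n\in\mathbb N$. The truncation map $\mathfrak{Tr}_{n+1,n}:\widehat{\mathcal E}^{m|n+1}_+\to\widehat{\mathcal E}^{m|n}_+$ commutes with the bar involutions.
   Context: $\mathcal U=U_q(\mathfrak{sl}(\infty))$ over $\mathbb Q(q)$ generated by $E_a,F_a,K_{a,a+1}^{\pm1}$ ($a\in\mathbb Z$), comultiplication $\Delta(E_a)=1\otimes E_a+E_a\otimes K_{a,a+1}^{-1}$, $\Delta(F_a)=F_a\otimes1+K_{a,a+1}\otimes F_a$; bar map $\bar q=q^{-1}$, fixing $E_a,F_a$, inverting $K_{a,a+1}$. $\Lambda^m\mathbb V$: basis $v_{a_1}\wedge\cdots\wedge v_{a_m}$ ($a_1>\cdots>a_m$); for index set $S$, $F_a$ replaces $a$ by $a+1$ if $a\in S,a+1\notin S$ (else $0$), $E_a$ replaces $a+1$ by $a$ if $a+1\in S,a\notin S$ (else $0$), $K_{a,a+1}$ acts by $q^{[a\in S]-[a+1\in S]}$. $\Lambda^n\mathbb W$: basis $w_{b_1}\wedge\cdots\wedge w_{b_n}$ ($b_1<\cdots<b_n$); $F_a$ replaces $a+1$ by $a$ if $a+1\in S,a\notin S$ (else $0$), $E_a$ replaces $a$ by $a+1$ if $a\in S,a+1\notin S$ (else $0$), $K_{a,a+1}$ acts by $q^{[a+1\in S]-[a\in S]}$. $I(m|n)=\{-m,\dots,-1\}\cup\{1,\dots,n\}$; $\mathbb Z^{m|n}_+=\{f:f(-m)>\cdots>f(-1),\ f(1)<\cdots<f(n)\}$, $\mathbb Z^{m|n}_{++}=\{f\in\mathbb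 Z^{m|n}_+:f(n)\le n\}$. $\mathcal E^{m|n}=\Lambda^m\mathbb V\otimes\Lambda^n\mathbb W$ with basis $K_f=v_{f(-m)}\wedge\cdots\wedge v_{f(-1)}\otimes w_{f(1)}\wedge\cdots\wedge w_{f(n)}$. $\widehat{\mathcal E}^{m|n}$: formal sums $\sum c_fK_f$ such that for every $d\in\mathbb N$ only finitely many $f$ with $c_f\ne0$ have $f(i)\ge-d$ for all $1\le i\le n$; $\widehat{\mathcal E}^{m|n}_+$: those supported on $\mathbb Z^{m|n}_{++}$. Super Bruhat ordering: with $d_i(j)=-\mathrm{sgn}(i)\delta_{ij}$, $f\downarrow g$ if $g=f-d_i+d_j$ ($i<0<j$, $f(i)=f(j)$), or $g=f\cdot\tau_{ij}$ ($i<j<0$, $f(i)>f(j)$), or $g=f\cdot\tau_{ij}$ ($0<i<j$, $f(i)<f(j)$); $\succ$ is the transitive closure. $f$ is typical if $\{f(i):i<0\}\cap\{f(j):j>0\}=\emptyset$. The bar involution on $\widehat{\mathcal E}^{m|n}$ is the unique continuous anti-linear map fixing $K_f$ for typical $f$, with $\overline{Xu}=\bar X\bar u$ for $X\in\mathcal U$, which is an involution and satisfies $\overline{K_f}\in K_f+$ (possibly infinite) $\mathbb Z[q,q^{-1}]$-combination of $K_g$ with $g\prec f$. $\mathfrak{Tr}_{n+1,n}$ is the (continuous) linear map sending $K_f$ ($f\in\mathbb Z^{m|n+1}_{++}$) to $K_{f^{(n)}}$ if $f(n+1)=n+1$ and to $0$ otherwise, $f^{(n)}$ being the restriction of $f$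 to $I(m|n)$. *)

(* Defs.v *)
From HB Require Import structures.
From Stdlib Require Import Relations.
From mathcomp Require Import all_boot all_order all_algebra.
From mathcomp Require Import fraction.
Set Implicit Arguments.
Unset Strict Implicit.
Unset Printing Implicit Defensive.
Import Order.TTheory GRing.Theory Num.Theory.
Local Open Scope ring_scope.

Definition Fq : fieldType := {fraction {poly rat}}.
Definition qq : Fq := tofrac ('X : {poly rat}).

Definition laurent_int (c : Fq) : Prop :=
  exists (p : {poly int}) (k : nat),
    c = (map_poly (fun z : int => (z%:~R : Fq)) p).[qq] / qq ^+ k.

(** A function f : I(m|n) -> Z is encoded as a pair (fv, fw) with
    fv p = f(p - m) for p : 'I_m   (so fv 0 = f(-m), fv (m-1) = f(-1)),
    fw r = f(r + 1) for r : 'I_n   (so fw 0 = f(1), fw (n-1) = f(n)). *)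
Definition Zmn (m n : nat) := ({ffun 'I_m -> int} * {ffun 'I_n -> int})%type.

(** Formal sums sum_f c_f K_f are coefficient functions. *)
Definition fsum (m n : nat) := Zmn m n -> Fq.

Definition inZplus m n (f : Zmn m n) : bool :=
  [forall p : 'I_m, forall r : 'I_m, (p < r)%N ==> (f.1 r < f.1 p)] &&
  [forall p : 'I_n, forall r : 'I_n, (p < r)%N ==> (f.2 p < f.2 r)].

(** f in Z^{m|n}_{++} : additionally f(n) <= n (stated as all f(j) <= n). *)
Definition inZpp m n (f : Zmn m n) : bool :=
  inZplus f && [forall r : 'I_n, f.2 r <= n%:Z].

Definition typical m n (f : Zmn m n) : bool :=
  [forall p : 'I_m, forall r : 'I_n, f.1 p != f.2 r].

Definition in_hatE m n (u : fsum m n) : Prop :=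
  (forall f, u f != 0 -> inZplus f) /\
  (forall d : nat, exists s : seq (Zmn m n),
     forall f, u f != 0 -> (forall r : 'I_n, - (d%:Z) <= f.2 r) -> f \in s).

Definition in_hatEp m n (u : fsum m n) : Prop :=
  in_hatE u /\ (forall f, u f != 0 -> inZpp f).

Definition Kb m n (f : Zmn m n) : fsum m n := fun g => (g == f)%:R.

Definition memb k (x : int) (s : {ffun 'I_k -> int}) : bool := [exists p, s p == x].
Definition repl k (x y : int) (s : {ffun 'I_k -> int}) : {ffun 'I_k -> int} :=
  [ffun p => if s p == x then y else s p].
(** replace a by a+1 if a in S, a+1 notin S (else 0 = None) *)
Definition upop k (a : int) (s : {ffun 'I_k -> int}) : option {ffun 'I_k -> int} :=
  if memb a s && ~~ memb (a + 1) s then Some (repl a (a + 1) s) else None.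
Definition downop k (a : int) (s : {ffun 'I_k -> int}) : option {ffun 'I_k -> int} :=
  if memb (a + 1) s && ~~ memb a s then Some (repl (a + 1) a s) else None.
(** exponent of q in the action of K_{a,a+1} on Lambda^m V resp. Lambda^n W *)
Definition KV k (a : int) (s : {ffun 'I_k -> int}) : int :=
  (memb a s : nat)%:Z - (memb (a + 1) s : nat)%:Z.
Definition KW k (a : int) (s : {ffun 'I_k -> int}) : int :=
  (memb (a + 1) s : nat)%:Z - (memb a s : nat)%:Z.

(** The (continuous) action of the generators on formal sums, via the
    comultiplication: F_a = F_a (x) 1 + K (x) F_a, E_a = 1 (x) E_a + E_a (x) K^-1,
    K = K (x) K.  On Lambda^m V, F_a = upop, E_a = downop; on Lambda^n W,
    F_a = downop, E_a = upop.  The coefficient of K_g is computed from the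
    unique possible preimage of g (the test checks that it is a preimage). *)
Definition actF m n (a : int) (u : fsum m n) : fsum m n := fun g =>
  (if upop a (repl (a + 1) a g.1) == Some g.1
   then u (repl (a + 1) a g.1, g.2) else 0)
  + (if downop a (repl a (a + 1) g.2) == Some g.2
     then qq ^ (KV a g.1) * u (g.1, repl a (a + 1) g.2) else 0).

Definition actE m n (a : int) (u : fsum m n) : fsum m n := fun g =>
  (if upop a (repl (a + 1) a g.2) == Some g.2
   then u (g.1, repl (a + 1) a g.2) else 0)
  + (if downop a (repl a (a + 1) g.1) == Some g.1
     then qq ^ (- KW a g.2) * u (repl a (a + 1) g.1, g.2) else 0).

Definition actK m n (a : int) (u : fsum m n) : fsum m n := fun g =>
  qq ^ (KV a g.1 + KW a g.2) * u g.

Definition actKinv m n (a : int) (u : fsum m n) : fsum m n := fun g =>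
  qq ^ (- (KV a g.1 + KW a g.2)) * u g.

Definition lowerAt k (p : 'I_k) (s : {ffun 'I_k -> int}) : {ffun 'I_k -> int} :=
  [ffun x => if x == p then s x - 1 else s x].
Definition swapAt k (p r : 'I_k) (s : {ffun 'I_k -> int}) : {ffun 'I_k -> int} :=
  [ffun x => if x == p then s r else if x == r then s p else s x].

Definition bdown m n (f g : Zmn m n) : Prop :=
  (exists (p : 'I_m) (r : 'I_n),
      f.1 p = f.2 r /\ g = (lowerAt p f.1, lowerAt r f.2))
  \/ (exists p r : 'I_m, [/\ (p < r)%N, f.1 r < f.1 p & g = (swapAt p r f.1, f.2)])
  \/ (exists p r : 'I_n, [/\ (p < r)%N, f.2 p < f.2 r & g = (f.1, swapAt p r f.2)]).

Definition bprec m n (g f : Zmn m n) : Prop := clos_trans (Zmn m n) (@bdown m n) f g.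

Definition is_bar m n (sig : Fq -> Fq) (psi : fsum m n -> fsum m n) : Prop :=
  (forall u, in_hatE u -> in_hatE (psi u)) /\
  (* continuous and anti-linear: psi(sum c_f K_f) = sum sig(c_f) psi(K_f) *)
  (forall u, in_hatE u -> forall g, exists s : seq (Zmn m n),
     [/\ uniq s,
         forall f, sig (u f) * psi (Kb f) g != 0 -> f \in s &
         psi u g = \sum_(f <- s) sig (u f) * psi (Kb f) g]) /\
  (forall f, inZplus f -> typical f -> psi (Kb f) = Kb f) /\
  (forall u, in_hatE u -> forall a : int,
     [/\ psi (actE a u) = actE a (psi u),
         psi (actF a u) = actF a (psi u) &
         psi (actK a u) = actKinv a (psi u)]) /\
  (forall u, in_hatE u -> psi (psi u) = u) /\
  (forall f, inZplus f -> exists c : fsum m n,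
     [/\ forall g, laurent_int (c g),
         forall g, c g != 0 -> bprec g f &
         psi (Kb f) = (fun g => Kb f g + c g)]).

Definition ext n (hw : {ffun 'I_n -> int}) (x : int) : {ffun 'I_n.+1 -> int} :=
  [ffun k => if unlift ord_max k is Some k' then hw k' else x].

Definition trunc m n (u : fsum m n.+1) : fsum m n := fun h =>
  u (h.1, ext h.2 (n.+1)%:Z).

(* Main.v *)
Require Import Defs.
From HB Require Import structures.
From Stdlib Require Import Relations FunctionalExtensionality.
From mathcomp Require Import all_boot all_order all_algebra all_fingroup zify ring lra.
Set Implicit Arguments.
Unset Strict Implicit.
Unset Printing Implicit Defensive.
Import Order.TTheory GRing.Theory Num.Theory.
Local Open Scope ring_scope.

Lemma membP k x (s : {ffun 'I_k -> int}) : reflect (exists p, s p = x) (memb x s).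
Proof. by apply: (iffP existsP) => -[p /eqP]; exists p. Qed.

Lemma memb_repl k x z y (s : {ffun 'I_k -> int}) :
  memb y (repl x z s) = (memb x s && (y == z)) || (memb y s && (y != x)).
Proof.
apply/membP/idP.
- case=> p; rewrite /repl ffunE; case: eqP => [<- <-|ne <-].
    by rewrite eqxx andbT; apply/orP; left; apply/membP; exists p.
  by apply/orP; right; apply/andP; split; [apply/membP; exists p|apply/eqP].
- case/orP=> /andP[/membP[p sp] H].
    by exists p; rewrite /repl ffunE sp eqxx (eqP H).
  exists p; rewrite /repl ffunE sp; case: eqP => // E.
  by move: H; rewrite E eqxx.
Qed.

Lemma repl_K k x z (s : {ffun 'I_k -> int}) : ~~ memb z s -> repl z x (repl x z s) = s.
Proof.
move=> nz; apply/ffunP=> p; rewrite /repl !ffunE.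
case: (s p =P x) => [->|ne]; first by rewrite eqxx.
case: eqP => // E; case/negP: nz; apply/membP; by exists p.
Qed.

Lemma upopP k a (s t : {ffun 'I_k -> int}) :
  upop a s = Some t -> [/\ memb a s, ~~ memb (a + 1) s & t = repl a (a + 1) s].
Proof. by rewrite /upop; case: ifP => // /andP[h1 h2] [<-]. Qed.

Lemma downopP k a (s t : {ffun 'I_k -> int}) :
  downop a s = Some t -> [/\ memb (a + 1) s, ~~ memb a s & t = repl (a + 1) a s].
Proof. by rewrite /downop; case: ifP => // /andP[h1 h2] [<-]. Qed.

Lemma upop_some k a (s : {ffun 'I_k -> int}) :
  memb a s -> ~~ memb (a + 1) s -> upop a s = Some (repl a (a + 1) s).
Proof. by move=> h1 h2; rewrite /upop h1 h2. Qed.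

Lemma downop_some k a (s : {ffun 'I_k -> int}) :
  memb (a + 1) s -> ~~ memb a s -> downop a s = Some (repl (a + 1) a s).
Proof. by move=> h1 h2; rewrite /downop h1 h2. Qed.

Lemma upop_none k a (s : {ffun 'I_k -> int}) : ~~ memb a s -> upop a s = None.
Proof. by rewrite /upop => /negbTE ->. Qed.

Lemma downop_none k a (s : {ffun 'I_k -> int}) : ~~ memb (a + 1) s -> downop a s = None.
Proof. by rewrite /downop => /negbTE ->. Qed.

Lemma if_natr (b c : bool) : (if b then (c%:R : Fq) else 0) = (b && c)%:R.
Proof. by case: b. Qed.

Lemma upop_repl_eq k a (x1 g1 : {ffun 'I_k -> int}) :
  (upop a (repl (a + 1) a x1) == Some x1) && (repl (a + 1) a x1 == g1)
  = (upop a g1 == Some x1) && (x1 == repl a (a+1) g1).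
Proof.
apply/idP/idP.
- case/andP=> /eqP U /eqP E; rewrite -E U eqxx /=.
  by case/upopP: U => _ _ {1}->.
- case/andP=> /eqP U /eqP E; case/upopP: (U) => _ h _.
  by rewrite E repl_K // -E U !eqxx.
Qed.

Lemma downop_repl_eq k a (x1 g1 : {ffun 'I_k -> int}) :
  (downop a (repl a (a + 1) x1) == Some x1) && (repl a (a + 1) x1 == g1)
  = (downop a g1 == Some x1) && (x1 == repl (a+1) a g1).
Proof.
apply/idP/idP.
- case/andP=> /eqP U /eqP E; rewrite -E U eqxx /=.
  by case/downopP: U => _ _ {1}->.
- case/andP=> /eqP U /eqP E; case/downopP: (U) => _ h _.
  by rewrite E repl_K // -E U !eqxx.
Qed.

Lemma actF_Kb m n a (g x : Zmn m n) :
  actF a (Kb g) x = ((upop a g.1 == Some x.1) && (x.2 == g.2))%:R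
    + ((downop a g.2 == Some x.2) && (x.1 == g.1))%:R * qq ^ (KV a x.1).
Proof.
rewrite /actF /Kb; case: x => x1 x2; case: g => g1 g2 /=; congr (_ + _).
- rewrite if_natr xpair_eqE andbA upop_repl_eq; congr ((nat_of_bool _)%:R).
  apply/idP/idP => [/andP[/andP[U _] V]|/andP[/eqP U V]].
   by rewrite U V.
  rewrite U eqxx V andbT /=. case/upopP: U => _ _ E. by apply/eqP.
- rewrite (_ : (if _ then _ else _) = ((downop a (repl a (a + 1) x2) == Some x2) &&
     ((x1, repl a (a + 1) x2) == (g1, g2)))%:R * qq ^ KV a x1); last first.
    by case: ifP => _; [rewrite mulrC | rewrite mul0r].
  congr ((nat_of_bool _)%:R * _); rewrite xpair_eqE andbCA downop_repl_eq.
  apply/idP/idP => [/andP[V /andP[U _]]|/andP[/eqP U V]].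
   by rewrite U V.
  rewrite U eqxx V /=. case/downopP: U => _ _ E. by apply/eqP.
Qed.

Lemma actE_Kb m n a (g x : Zmn m n) :
  actE a (Kb g) x = ((upop a g.2 == Some x.2) && (x.1 == g.1))%:R
    + ((downop a g.1 == Some x.1) && (x.2 == g.2))%:R * qq ^ (- KW a x.2).
Proof.
rewrite /actE /Kb; case: x => x1 x2; case: g => g1 g2 /=; congr (_ + _).
- rewrite if_natr xpair_eqE andbCA upop_repl_eq; congr ((nat_of_bool _)%:R).
  apply/idP/idP => [/andP[V /andP[U _]]|/andP[/eqP U V]].
   by rewrite U V.
  rewrite U eqxx V /=. case/upopP: U => _ _ E. by apply/eqP.
- rewrite (_ : (if _ then _ else _) = ((downop a (repl a (a + 1) x1) == Some x1) &&
     ((repl a (a + 1) x1, x2) == (g1, g2)))%:R * qq ^ (- KW a x2)); last first.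
    by case: ifP => _; [rewrite mulrC | rewrite mul0r].
  congr ((nat_of_bool _)%:R * _); rewrite xpair_eqE andbA downop_repl_eq.
  apply/idP/idP => [/andP[/andP[U _] V]|/andP[/eqP U V]].
   by rewrite U V.
  rewrite U eqxx V andbT /=. case/downopP: U => _ _ E. by apply/eqP.
Qed.


Definition restr n (t : {ffun 'I_n.+1 -> int}) : {ffun 'I_n -> int} :=
  [ffun k => t (lift ord_max k)].

Lemma ext_lift n (s : {ffun 'I_n -> int}) z k : ext s z (lift ord_max k) = s k.
Proof. by rewrite /ext ffunE liftK. Qed.

Lemma ext_max n (s : {ffun 'I_n -> int}) z : ext s z ord_max = z.
Proof. by rewrite /ext ffunE unlift_none. Qed.

Lemma restr_ext n (s : {ffun 'I_n -> int}) z : restr (ext s z) = s.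
Proof. by apply/ffunP=> k; rewrite ffunE ext_lift. Qed.

Lemma ext_restr n (t : {ffun 'I_n.+1 -> int}) : ext (restr t) (t ord_max) = t.
Proof.
apply/ffunP=> k; case: (unliftP ord_max k) => [j ->|->].
  by rewrite ext_lift ffunE.
by rewrite ext_max.
Qed.

Lemma ext_inj n (s s' : {ffun 'I_n -> int}) z z' : ext s z = ext s' z' -> s = s' /\ z = z'.
Proof.
move=> E; split; first by rewrite -(restr_ext s z) E restr_ext.
by rewrite -(ext_max s z) E ext_max.
Qed.

Lemma ext_eq n (s s' : {ffun 'I_n -> int}) z z' : (ext s z == ext s' z') = (s == s') && (z == z').
Proof.
apply/eqP/andP => [/ext_inj [-> ->]|[/eqP -> /eqP ->]]; by [].
Qed.

Lemma memb_ext n x (s : {ffun 'I_n -> int}) z : memb x (ext s z) = memb x s || (x == z).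
Proof.
apply/membP/orP => [[k]|[/membP[k <-]|/eqP ->]].
- case: (unliftP ord_max k) => [j ->|->]; rewrite ?ext_lift ?ext_max => <-.
    by left; apply/membP; exists j.
  by right.
- by exists (lift ord_max k); exact: ext_lift.
- by exists ord_max; exact: ext_max.
Qed.

Lemma repl_ext n x y (s : {ffun 'I_n -> int}) z :
  repl x y (ext s z) = ext (repl x y s) (if z == x then y else z).
Proof.
apply/ffunP=> k; case: (unliftP ord_max k) => [j ->|->].
  by rewrite /repl /ext !ffunE liftK; rewrite ffunE.
rewrite /repl /ext !ffunE.
have -> : unlift (@ord_max n) ord_max = None by exact: unlift_none.
by [].
Qed.

Lemma sum_ext n (s : {ffun 'I_n -> int}) z : \sum_(r < n.+1) ext s z r = \sum_(r < n) s r + z.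
Proof.
rewrite big_ord_recr /= ext_max; congr (_ + _); apply: eq_bigr => i _.
have -> : widen_ord (leqnSn n) i = lift ord_max i by apply/val_inj; rewrite /= /bump leqNgt ltn_ord.
exact: ext_lift.
Qed.

Lemma sum_repl k x y (s : {ffun 'I_k -> int}) (p0 : 'I_k) :
  injective s -> s p0 = x -> \sum_p repl x y s p = \sum_p s p + (y - x).
Proof.
move=> inj sp0.
rewrite (eq_bigr (fun p => s p + (if p == p0 then y - x else 0))); last first.
  move=> p _; rewrite /repl ffunE; case: (p =P p0) => [->|ne].
    by rewrite sp0 eqxx; ring.
  case: eqP => [E|]; last by rewrite addr0.
  by case: ne; apply: inj; rewrite E sp0.
by rewrite big_split /= -big_mkcond /= big_pred1_eq.
Qed.


Definition Ssum m n (f : Zmn m n) : int := \sum_p f.1 p + \sum_r f.2 r.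

Lemma sum_lowerAt k (p : 'I_k) s : \sum_x lowerAt p s x = \sum_x s x - 1.
Proof.
rewrite (bigD1 p) //= [in RHS](bigD1 p) //= /lowerAt ffunE eqxx.
rewrite (eq_bigr s); first by ring.
by move=> x /negbTE nx; rewrite ffunE nx.
Qed.

Lemma sum_swapAt k (p r : 'I_k) s : \sum_x swapAt p r s x = \sum_x s x.
Proof.
rewrite [RHS](reindex_inj (@perm_inj _ (tperm p r))); apply: eq_bigr => x _.
rewrite /swapAt ffunE permE /=.
by case: ifP => // _; case: ifP.
Qed.

Lemma bdown_sum m n (f g : Zmn m n) : bdown f g -> Ssum g <= Ssum f.
Proof.
case=> [[p [r [_ ->]]]|[[p [r [_ _ ->]]]|[p [r [_ _ ->]]]]];
  rewrite /Ssum /= ?sum_lowerAt ?sum_swapAt //.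
by apply: lerD; rewrite lerBlDr lerDl.
Qed.

Lemma bprec_sum m n (f g : Zmn m n) : bprec g f -> Ssum g <= Ssum f.
Proof.
rewrite /bprec; elim=> [x y /bdown_sum //|x y z _ H1 _ H2].
exact: le_trans H2 H1.
Qed.

Lemma bdown_bound m n (f g : Zmn m n) B : bdown f g ->
  (forall r, f.2 r <= B) -> forall r, g.2 r <= B.
Proof.
case=> [[p [r [_ ->]]]|[[p [r [_ _ ->]]]|[p [r [_ _ ->]]]]] H x /=; rewrite ?ffunE //.
- case: eqP => _ //; have := H x; lia.
- by case: eqP => _; [|case: eqP].
Qed.

Lemma bprec_bound m n (f g : Zmn m n) B : bprec g f ->
  (forall r, f.2 r <= B) -> forall r, g.2 r <= B.
Proof.
rewrite /bprec; elim.
  by move=> x y H; apply: bdown_bound.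
move=> x y z _ H1 _ H2 Hb; exact: H2 (H1 Hb).
Qed.

Lemma Zplus_inj1 m n (f : Zmn m n) : inZplus f -> injective f.1.
Proof.
case/andP=> /forallP H _ p r E; have [lt|lt|eq] := ltngtP p r; last exact: val_inj.
  by move/forallP: (H p) => /(_ r); rewrite lt /= E ltxx.
by move/forallP: (H r) => /(_ p); rewrite lt /= E ltxx.
Qed.

Lemma Zplus_inj2 m n (f : Zmn m n) : inZplus f -> injective f.2.
Proof.
case/andP=> _ /forallP H p r E; have [lt|lt|eq] := ltngtP p r; last exact: val_inj.
  by move/forallP: (H p) => /(_ r); rewrite lt /= E ltxx.
by move/forallP: (H r) => /(_ p); rewrite lt /= E ltxx.
Qed.

Lemma sum_nz (T : eqType) (F : T -> Fq) (s : seq T) :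
  \sum_(x <- s) F x = \sum_(x <- s | F x != 0) F x.
Proof.
rewrite [RHS]big_mkcond; apply: eq_bigr => x _.
by case: ifP => [_|/negbFE/eqP ->].
Qed.

Lemma sum_indep (T : eqType) (F : T -> Fq) (s s' : seq T) :
  uniq s -> uniq s' -> (forall x, F x != 0 -> x \in s) -> (forall x, F x != 0 -> x \in s') ->
  \sum_(x <- s) F x = \sum_(x <- s') F x.
Proof.
move=> us us' cs cs'.
rewrite (sum_nz F s) (sum_nz F s').
rewrite -big_filter.
rewrite -[RHS]big_filter.
apply: (perm_big _ (uniq_perm _ _ _)).
- exact: filter_uniq.
- exact: filter_uniq.
move=> x; rewrite !mem_filter.
case E: (F x != 0); last by [].
by rewrite (cs _ E) (cs' _ E).
Qed.

Lemma Kb_hatE m n (f : Zmn m n) : inZplus f -> in_hatE (Kb f).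
Proof.
move=> Zf; split.
  move=> g; rewrite /Kb; case: (g =P f) => [-> //|_].
  by rewrite /= eqxx.
move=> d; exists [:: f] => g; rewrite /Kb inE; case: (g =P f) => [-> //|_].
by rewrite /= eqxx.
Qed.

Lemma zero_hatE m n : in_hatE (fun _ : Zmn m n => (0 : Fq)).
Proof. by split=> [g|d]; [rewrite eqxx | exists [::]=> g; rewrite eqxx]. Qed.

Lemma hatE_add m n (u v : fsum m n) c : in_hatE u -> in_hatE v ->
  in_hatE (fun x => u x + c * v x).
Proof.
move=> [su fu] [sv fv]; split.
  move=> g nz; case: (u g =P 0) => [E|/eqP]; last exact: su.
  apply: sv; apply/eqP => E'; move: nz; rewrite E E' mulr0 addr0 eqxx; by [].
move=> d; case: (fu d) => s1 H1; case: (fv d) => s2 H2; exists (s1 ++ s2) => g nz Hd.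
rewrite mem_cat; apply/orP; case: (u g =P 0) => [E|/eqP ne]; last by left; exact: (H1 g ne Hd).
right; apply: (H2 g _ Hd); apply/eqP => E'; move: nz; rewrite E E' mulr0 addr0 eqxx; by [].
Qed.

Section Bar.
Variables (m n : nat) (sig : {rmorphism Fq -> Fq}) (psi : fsum m n -> fsum m n).
Hypothesis Hbar : is_bar sig psi.

Lemma psi_expand (u : fsum m n) g S : in_hatE u -> uniq S ->
  (forall f, sig (u f) * psi (Kb f) g != 0 -> f \in S) ->
  psi u g = \sum_(f <- S) sig (u f) * psi (Kb f) g.
Proof.
move=> hu uS cS; case: Hbar => _ [Hc _].
case: (Hc u hu g) => s [us cs ->]; exact: sum_indep.
Qed.

Lemma psi_lin (u v : fsum m n) c : in_hatE u -> in_hatE v ->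
  psi (fun x => u x + c * v x) = (fun x => psi u x + sig c * psi v x).
Proof.
move=> hu hv; have hw := hatE_add c hu hv.
apply: functional_extensionality => g.
case: Hbar => _ [Hc _].
case: (Hc _ hu g) => s1 [u1 c1 _]; case: (Hc _ hv g) => s2 [u2 c2 _].
case: (Hc _ hw g) => s3 [u3 c3 _].
set S := undup (s1 ++ s2 ++ s3).
have uS : uniq S by exact: undup_uniq.
have inS1 x : x \in s1 -> x \in S by rewrite mem_undup !mem_cat => ->.
have inS2 x : x \in s2 -> x \in S by rewrite mem_undup !mem_cat => ->; rewrite orbT.
have inS3 x : x \in s3 -> x \in S by rewrite mem_undup !mem_cat => ->; rewrite !orbT.
rewrite (psi_expand hw uS) ?(psi_expand hu uS) ?(psi_expand hv uS); last 3 first.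
- by move=> f /c2 /inS2.
- by move=> f /c1 /inS1.
- by move=> f /c3 /inS3.
rewrite mulr_sumr -big_split /=; apply: eq_bigr => f _.
by rewrite rmorphD rmorphM /=; ring.
Qed.

Lemma psi_zero : psi (fun _ => 0) = (fun _ => 0).
Proof.
apply: functional_extensionality => g.
rewrite (@psi_expand _ g [::]) ?big_nil //; first exact: zero_hatE.
by move=> f; rewrite rmorph0 mul0r eqxx.
Qed.

End Bar.


Lemma lift_val n (p : 'I_n) : nat_of_ord (lift ord_max p) = p.
Proof. by rewrite /= /bump leqNgt ltn_ord. Qed.

Lemma Zplus_restr m n (h1 : {ffun 'I_m -> int}) (h2 : {ffun 'I_n -> int}) z :
  inZplus (h1, ext h2 z) -> inZplus (h1, h2).
Proof.
case/andP=> H1 /forallP H2; apply/andP; split=> //.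
apply/forallP=> p; apply/forallP=> r; apply/implyP=> lt.
move/forallP: (H2 (lift ord_max p)) => /(_ (lift ord_max r)).
by rewrite !lift_val lt /= !ext_lift.
Qed.

Lemma bad_ext m n (h1 : {ffun 'I_m -> int}) (t : {ffun 'I_n -> int}) z y :
  memb y t -> z <= y -> ~~ inZplus (h1, ext t z).
Proof.
case/membP=> r tr zy; apply/negP; case/andP=> _ /forallP /(_ (lift ord_max r)) /forallP /(_ ord_max).
rewrite lift_val ltn_ord /= ext_lift ext_max tr; lia.
Qed.

Lemma zero_of_supp m n (u : fsum m n) (P : pred (Zmn m n)) :
  (forall f, u f != 0 -> P f) -> forall f, ~~ P f -> u f = 0.
Proof. by move=> H f nP; case: (u f =P 0) => // /eqP /H; rewrite (negbTE nP). Qed.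

Lemma some_eq (T : eqType) (x y : T) : (Some x == Some y) = (x == y).
Proof. by apply/eqP/eqP => [[]|->]. Qed.

Section Trunc.
Variables m n : nat.
Local Notation N := (n.+1)%:Z.

Lemma trunc_hatE (u : fsum m n.+1) : in_hatE u -> in_hatE (trunc u).
Proof.
case=> su fu; split.
  by move=> [h1 h2] /su /Zplus_restr.
move=> d; case: (fu d) => s H; exists (map (fun f => (f.1, restr f.2)) s) => [[h1 h2]] nz Hd.
apply/mapP; exists (h1, ext h2 N); last by rewrite /= restr_ext.
apply: (H _ nz) => r /=; case: (unliftP ord_max r) => [j ->|->].
  by rewrite ext_lift.
rewrite ext_max; lia.
Qed.

Lemma trunc_Kb (f : Zmn m n.+1) :
  trunc (Kb f) = if f.2 ord_max == N then Kb (f.1, restr f.2) else (fun _ => 0).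
Proof.
apply: functional_extensionality => -[h1 h2]; rewrite /trunc /Kb; case: f => f1 f2 /=.
case: (f2 ord_max =P N) => [E|E].
  rewrite -[in LHS](ext_restr f2) E !xpair_eqE ext_eq eqxx andbT; by [].
case: ((h1, ext h2 N) =P (f1, f2)) => [[_ E2]|_]; last by [].
by case: E; rewrite -E2 ext_max.
Qed.

Lemma trunc_actF (u : fsum m n.+1) a : (forall f, u f != 0 -> inZpp f) ->
  trunc (actF a u) = actF a (trunc u).
Proof.
move=> su; have u0 := zero_of_supp su.
apply: functional_extensionality => -[h1 h2]; rewrite /trunc /actF /=.
congr (_ + _); rewrite repl_ext.
set t := repl a (a + 1) h2.
case: (N =P a) => [Na|Na].
  rewrite (u0 (h1, ext t (a + 1))); last first.
    rewrite negb_and; apply/orP; right; rewrite negb_forall; apply/existsP; exists ord_max.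
    by rewrite /= ext_max -Na; lia.
  rewrite mulr0 if_same; case: ifP => // /eqP /downopP [mt _ _].
  rewrite (u0 (h1, ext t N)); first by rewrite mulr0.
  by rewrite negb_and (bad_ext h1 mt) //; lia.
case: (N =P a + 1) => [Na1|Na1].
  have -> : (downop a (ext t N) == Some (ext h2 N)) = false.
    case D: (downop a (ext t N)) => [x|] //; case/downopP: D => _ _ ->.
    rewrite repl_ext -Na1 eqxx /=; apply/negP => /eqP [] /ext_inj [_ E]; by case: Na.
  case: ifP => // /eqP /downopP [mt _ _].
  rewrite (u0 (h1, ext t N)); first by rewrite mulr0.
  by rewrite negb_and (bad_ext h1 mt) // Na1.
rewrite /downop !memb_ext repl_ext.
have -> : (a + 1 == N) = false by apply/eqP => E; apply: Na1.
have -> : (a == N) = false by apply/eqP => E; apply: Na.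
have -> : (N == a + 1) = false by apply/eqP.
rewrite !orbF; case: (memb (a + 1) t && ~~ memb a t) => //=.
by rewrite some_eq some_eq ext_eq eqxx andbT.
Qed.

Lemma trunc_actE (u : fsum m n.+1) a : a + 1 != N -> a != N ->
  trunc (actE a u) = actE a (trunc u).
Proof.
move=> Na1 Na.
apply: functional_extensionality => -[h1 h2]; rewrite /trunc /actE /=.
have -> : KW a (ext h2 N) = KW a h2.
  by rewrite /KW !memb_ext (negbTE Na1) (negbTE Na) !orbF.
congr (_ + _); rewrite repl_ext.
have -> : (N == a + 1) = false by apply/eqP => E; move: Na1; rewrite E eqxx.
rewrite /upop !memb_ext repl_ext (negbTE Na1) (negbTE Na) !orbF.
have -> : (N == a) = false by apply/eqP => E; move: Na; rewrite E eqxx.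
case: (memb a (repl (a + 1) a h2) && ~~ memb (a + 1) (repl (a + 1) a h2)) => //=.
by rewrite some_eq some_eq ext_eq eqxx andbT.
Qed.

End Trunc.


Lemma actF_sub m n a (u v : fsum m n) x :
  actF a (fun y => u y - v y) x = actF a u x - actF a v x.
Proof. rewrite /actF; case: ifP => _; case: ifP => _; ring. Qed.

Lemma actE_sub m n a (u v : fsum m n) x :
  actE a (fun y => u y - v y) x = actE a u x - actE a v x.
Proof. rewrite /actE; case: ifP => _; case: ifP => _; ring. Qed.

Lemma Kb_supp m n (f x : Zmn m n) : Kb f x != 0 -> x = f.
Proof. by rewrite /Kb; case: (x =P f) => // _; rewrite /= eqxx. Qed.

Lemma Kb_neq m n (f x : Zmn m n) : x != f -> Kb f x = 0.
Proof. by rewrite /Kb => /negbTE ->. Qed.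

Section Main.
Variables (m n : nat) (sig : {rmorphism Fq -> Fq})
  (psi1 : fsum m n.+1 -> fsum m n.+1) (psi0 : fsum m n -> fsum m n).
Hypothesis H1 : is_bar sig psi1.
Hypothesis H0 : is_bar sig psi0.
Local Notation N := (n.+1)%:Z.

Definition X (f : Zmn m n.+1) : fsum m n :=
  fun h => trunc (psi1 (Kb f)) h - psi0 (trunc (Kb f)) h.

Lemma psi1_Zpp (f : Zmn m n.+1) : inZpp f -> forall x, psi1 (Kb f) x != 0 -> inZpp x.
Proof.
move=> Zf x nz; case/andP: (Zf) => Zp Bd.
case: H1 => Hh [_ [_ [_ [_ Ht]]]].
case: (Hh _ (Kb_hatE Zp)) => su _; apply/andP; split; first exact: su.
case: (Ht _ Zp) => c [_ cs E]; move: nz; rewrite E.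
case: (x =P f) => [-> _|ne nz]; first by [].
rewrite Kb_neq in nz; last by apply/eqP.
rewrite add0r in nz; apply/forallP; apply: (bprec_bound (cs _ nz)).
by move=> r; move/forallP: Bd.
Qed.

Lemma truncKb_hatE (f : Zmn m n.+1) : inZplus f -> in_hatE (trunc (Kb f)).
Proof. by move=> Zf; apply: trunc_hatE; apply: Kb_hatE. Qed.

Lemma Kb_Zpp (f : Zmn m n.+1) : inZpp f -> forall x, Kb f x != 0 -> inZpp x.
Proof. by move=> Zf x /Kb_supp ->. Qed.

Lemma X_supp (f : Zmn m n.+1) y : inZpp f -> X f y != 0 -> inZplus y.
Proof.
move=> Zf; case/andP: (Zf) => Zp _.
case: H1 => Hh1 _; case: H0 => Hh0 _.
rewrite /X; case: (trunc (psi1 (Kb f)) y =P 0) => [->|/eqP nz _].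
  rewrite sub0r oppr_eq0 => nz.
  by case: (Hh0 _ (truncKb_hatE Zp)) => su _; apply: su.
case: (Hh1 _ (Kb_hatE Zp)) => su _; move: nz; rewrite /trunc => /su.
by case: y => y1 y2 /Zplus_restr.
Qed.

Lemma Ssum_ext (h1 : {ffun 'I_m -> int}) (h2 : {ffun 'I_n -> int}) z :
  Ssum (h1, ext h2 z) = Ssum (h1, h2) + z.
Proof. by rewrite /Ssum /= sum_ext addrA. Qed.

Lemma X_bound (f : Zmn m n.+1) h0 : inZpp f -> X f h0 != 0 -> Ssum h0 + N <= Ssum f.
Proof.
move=> Zf; case/andP: (Zf) => Zp _.
case: H1 => _ [_ [_ [_ [_ Ht1]]]]; case: (Ht1 _ Zp) => c1 [_ cs1 E1].
have B1 : c1 (h0.1, ext h0.2 N) != 0 -> Ssum h0 + N <= Ssum f.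
  move=> /cs1 /bprec_sum; case: h0 => h1 h2; by rewrite Ssum_ext.
rewrite /X trunc_Kb /trunc E1.
case: f Zf Zp cs1 E1 B1 => f1 f2 Zf Zp cs1 E1 B1 /=.
case: (f2 ord_max =P N) => [E|E]; last first.
  rewrite (psi_zero H0) Kb_neq ?add0r ?subr0 //.
  apply/negP => /eqP [_ E2]; by apply: E; rewrite -E2 ext_max.
have Ef2 : f2 = ext (restr f2) N by rewrite -{1}(ext_restr f2) E.
move: Zf Zp cs1 E1 B1; rewrite Ef2 restr_ext; move: (restr f2) => g2 Zf Zp cs1 E1 B1.
have Zp0 : inZplus (f1, g2) by apply: Zplus_restr Zp.
case: H0 => _ [_ [_ [_ [_ Ht0]]]]; case: (Ht0 _ Zp0) => c0 [_ cs0 E0].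
rewrite E0 /Kb xpair_eqE ext_eq eqxx andbT -xpair_eqE.
case: (c1 (h0.1, ext h0.2 N) =P 0) => [->|/eqP nz _]; last exact: B1.
rewrite addr0 opprD addrA subrr add0r oppr_eq0 => /cs0 /bprec_sum.
by rewrite Ssum_ext lerD2r.
Qed.

Lemma X_typ (f : Zmn m n.+1) h0 : inZpp f -> typical f -> X f h0 = 0.
Proof.
move=> Zf Tf; case/andP: (Zf) => Zp _.
case: H1 => _ [_ [Hty1 _]]; case: H0 => _ [_ [Hty0 _]].
rewrite /X Hty1 // trunc_Kb.
case: (f.2 ord_max =P N) => [E|E]; last by rewrite (psi_zero H0) subrr.
rewrite Hty0 ?subrr //.
  case: f Zf Zp Tf E => f1 f2 Zf Zp Tf E /=.
  by apply: (@Zplus_restr _ _ _ _ N); rewrite -E ext_restr.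
apply/forallP=> p; apply/forallP=> r; rewrite ffunE.
by move/forallP: Tf => /(_ p) /forallP /(_ (lift ord_max r)).
Qed.

Lemma X_F (f h : Zmn m n.+1) a h0 : inZpp h -> actF a (Kb h) = Kb f ->
  X f h0 = actF a (X h) h0.
Proof.
move=> Zh E; case/andP: (Zh) => Zp _.
case: H1 => _ [_ [_ [Hc1 _]]]; case: H0 => _ [_ [_ [Hc0 _]]].
rewrite /X -E; case: (Hc1 _ (Kb_hatE Zp) a) => _ -> _.
rewrite (trunc_actF _ (psi1_Zpp Zh)) (trunc_actF _ (Kb_Zpp Zh)).
case: (Hc0 _ (truncKb_hatE Zp) a) => _ -> _.
by rewrite actF_sub.
Qed.

Lemma X_E (f h : Zmn m n.+1) a h0 : a + 1 != N -> a != N -> inZpp h ->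
  actE a (Kb h) = Kb f -> X f h0 = actE a (X h) h0.
Proof.
move=> Na1 Na Zh E; case/andP: (Zh) => Zp _.
case: H1 => _ [_ [_ [Hc1 _]]]; case: H0 => _ [_ [_ [Hc0 _]]].
rewrite /X -E; case: (Hc1 _ (Kb_hatE Zp) a) => -> _ _.
rewrite (trunc_actE _ Na1 Na) (trunc_actE _ Na1 Na).
case: (Hc0 _ (truncKb_hatE Zp) a) => -> _ _.
by rewrite actE_sub.
Qed.

Lemma X_pair (f g g' : Zmn m n.+1) a cst h0 : inZpp g -> inZplus f -> inZplus g' ->
  actF a (Kb g) = (fun x => Kb f x + cst * Kb g' x) ->
  X f h0 = actF a (X g) h0 - sig cst * X g' h0.
Proof.
move=> Zg Zf Zg' E; case/andP: (Zg) => Zp _.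
case: H1 => _ [_ [_ [Hc1 _]]]; case: H0 => _ [_ [_ [Hc0 _]]].
have E1 : psi1 (Kb f) = fun x => actF a (psi1 (Kb g)) x - sig cst * psi1 (Kb g') x.
  case: (Hc1 _ (Kb_hatE Zp) a) => _ <- _; rewrite E (psi_lin H1 _ (Kb_hatE Zf) (Kb_hatE Zg')).
  by apply: functional_extensionality => x; rewrite addrK.
have Et : (fun x => trunc (Kb f) x + cst * trunc (Kb g') x) = actF a (trunc (Kb g)).
  by rewrite -(trunc_actF _ (Kb_Zpp Zg)) E.
have E0 : psi0 (trunc (Kb f)) = fun x => actF a (psi0 (trunc (Kb g))) x - sig cst * psi0 (trunc (Kb g')) x.
  case: (Hc0 _ (truncKb_hatE Zp) a) => _ <- _; rewrite -Et.
  rewrite (psi_lin H0 _ (truncKb_hatE Zf) (truncKb_hatE Zg')).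
  by apply: functional_extensionality => x; rewrite addrK.
have T1 : trunc (psi1 (Kb f)) h0 =
    trunc (actF a (psi1 (Kb g))) h0 - sig cst * trunc (psi1 (Kb g')) h0.
  by rewrite /trunc E1.
rewrite (trunc_actF _ (psi1_Zpp Zg)) in T1.
rewrite /X E0 T1 actF_sub; ring.
Qed.

End Main.


Lemma sum_repl_memb k x y (s : {ffun 'I_k -> int}) :
  injective s -> memb x s -> \sum_p repl x y s p = \sum_p s p + (y - x).
Proof. by move=> inj /membP [p0 sp0]; apply: sum_repl sp0. Qed.

Lemma Ssum_repl1 m n (p1 : {ffun 'I_m -> int}) (p2 : {ffun 'I_n -> int}) x y :
  inZplus (p1, p2) -> memb x p1 -> Ssum (repl x y p1, p2) = Ssum (p1, p2) + (y - x).
Proof.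
move=> Z mx; rewrite /Ssum /= (sum_repl_memb _ (Zplus_inj1 Z) mx).
ring.
Qed.

Lemma Ssum_repl2 m n (p1 : {ffun 'I_m -> int}) (p2 : {ffun 'I_n -> int}) x y :
  inZplus (p1, p2) -> memb x p2 -> Ssum (p1, repl x y p2) = Ssum (p1, p2) + (y - x).
Proof.
move=> Z mx; rewrite /Ssum /= (sum_repl_memb _ (Zplus_inj2 Z) mx).
ring.
Qed.

Lemma actF_vanish m n a (Y : fsum m n) h0 :
  (forall y, Y y != 0 -> inZplus y) -> (forall y, Ssum h0 - 1 <= Ssum y -> Y y = 0) ->
  actF a Y h0 = 0.
Proof.
move=> su V; rewrite /actF; case: h0 V => h1 h2 V /=.
have Y0 y : (Y y != 0 -> Ssum (h1, h2) - 1 <= Ssum y) -> Y y = 0.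
  move=> H; case: (Y y =P 0) => // /eqP nz; exact: V (H nz).
rewrite (_ : (if _ then Y _ else 0) = 0); last first.
  case: ifP => // /eqP /upopP [ma _ Eh]; apply: Y0 => /su Z.
  rewrite {1}Eh (Ssum_repl1 _ Z ma); lia.
rewrite add0r; case: ifP => // /eqP /downopP [ma _ Eh].
rewrite (_ : Y _ = 0) ?mulr0 //; apply: Y0 => /su Z.
rewrite {1}Eh (Ssum_repl2 _ Z ma); lia.
Qed.

Lemma actE_vanish m n a (Y : fsum m n) h0 :
  (forall y, Y y != 0 -> inZplus y) -> (forall y, Ssum h0 - 1 <= Ssum y -> Y y = 0) ->
  actE a Y h0 = 0.
Proof.
move=> su V; rewrite /actE; case: h0 V => h1 h2 V /=.
have Y0 y : (Y y != 0 -> Ssum (h1, h2) - 1 <= Ssum y) -> Y y = 0.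
  move=> H; case: (Y y =P 0) => // /eqP nz; exact: V (H nz).
rewrite (_ : (if _ then Y _ else 0) = 0); last first.
  case: ifP => // /eqP /upopP [ma _ Eh]; apply: Y0 => /su Z.
  rewrite {1}Eh (Ssum_repl2 _ Z ma); lia.
rewrite add0r; case: ifP => // /eqP /downopP [ma _ Eh].
rewrite (_ : Y _ = 0) ?mulr0 //; apply: Y0 => /su Z.
rewrite {1}Eh (Ssum_repl1 _ Z ma); lia.
Qed.


Lemma rp_lt (a u v : int) : u < v -> u != a -> v != a ->
  (if u == a + 1 then a else u) < (if v == a + 1 then a else v).
Proof.
move=> lt /eqP nu /eqP nv; case: (u =P a + 1) => [eu|]; case: (v =P a + 1) => [ev|] /=; lia.
Qed.

Lemma repl_at k x y (s : {ffun 'I_k -> int}) p : repl x y s p = if s p == x then y else s p.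
Proof. by rewrite /repl ffunE. Qed.

Lemma notmemb k x (s : {ffun 'I_k -> int}) p : ~~ memb x s -> s p != x.
Proof. by move=> nm; apply/eqP => E; case/negP: nm; apply/membP; exists p. Qed.

Lemma Zplus_replV m n (f1 : {ffun 'I_m -> int}) (f2 : {ffun 'I_n -> int}) a :
  inZplus (f1, f2) -> ~~ memb a f1 -> inZplus (repl (a + 1) a f1, f2).
Proof.
case/andP=> /forallP A B nm; apply/andP; split=> //.
apply/forallP=> p; apply/forallP=> r; apply/implyP=> lt.
move/forallP: (A p) => /(_ r); rewrite lt /= => H.
by rewrite !repl_at; apply: rp_lt => //; apply: notmemb.
Qed.

Lemma Zplus_replW m n (f1 : {ffun 'I_m -> int}) (f2 : {ffun 'I_n -> int}) a :
  inZplus (f1, f2) -> ~~ memb a f2 -> inZplus (f1, repl (a + 1) a f2).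
Proof.
case/andP=> A /forallP B nm; apply/andP; split=> //.
apply/forallP=> p; apply/forallP=> r; apply/implyP=> lt.
move/forallP: (B p) => /(_ r); rewrite lt /= => H.
by rewrite !repl_at; apply: rp_lt => //; apply: notmemb.
Qed.

Lemma Zpp_replV m n (f1 : {ffun 'I_m -> int}) (f2 : {ffun 'I_n -> int}) a :
  inZpp (f1, f2) -> ~~ memb a f1 -> inZpp (repl (a + 1) a f1, f2).
Proof. by case/andP=> Z B nm; rewrite /inZpp Zplus_replV. Qed.

Lemma Zpp_replW m n (f1 : {ffun 'I_m -> int}) (f2 : {ffun 'I_n -> int}) a :
  inZpp (f1, f2) -> ~~ memb a f2 -> inZpp (f1, repl (a + 1) a f2).
Proof.
case/andP=> Z /forallP B nm; rewrite /inZpp Zplus_replW //=.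
apply/forallP=> r; rewrite repl_at; have := B r; case: eqP => //= -> ; lia.
Qed.

Lemma memb_repl_self k a (s : {ffun 'I_k -> int}) : memb (a + 1) (repl (a + 1) a s) = false.
Proof.
rewrite memb_repl eqxx andbF orbF.
have -> : (a + 1 == a) = false by apply/eqP; lia.
by rewrite andbF.
Qed.

Lemma memb_repl_new k a (s : {ffun 'I_k -> int}) : memb (a + 1) s -> memb a (repl (a + 1) a s).
Proof. by move=> mx; rewrite memb_repl mx eqxx. Qed.

Lemma memb_repl_other k x z y (s : {ffun 'I_k -> int}) : y != z -> y != x ->
  memb y (repl x z s) = memb y s.
Proof. by move=> n1 n2; rewrite memb_repl (negbTE n1) n2 andbF andbT. Qed.

Lemma Kb_eq m n (f x : Zmn m n) : Kb f x = (x == f)%:R.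
Proof. by []. Qed.

Lemma relV m n (f1 : {ffun 'I_m -> int}) (f2 : {ffun 'I_n -> int}) a :
  memb (a + 1) f1 -> ~~ memb (a + 1) f2 -> ~~ memb a f1 ->
  actF a (Kb (repl (a + 1) a f1, f2)) = Kb (f1, f2).
Proof.
move=> m1 n2 n1; apply: functional_extensionality => -[y1 y2].
rewrite actF_Kb /= (downop_none n2) upop_some ?memb_repl_new ?memb_repl_self //.
rewrite repl_K // Kb_eq xpair_eqE some_eq mul0r addr0.
by rewrite (eq_sym f1).
Qed.

Lemma relW m n (f1 : {ffun 'I_m -> int}) (f2 : {ffun 'I_n -> int}) a :
  memb (a + 1) f2 -> ~~ memb (a + 1) f1 -> ~~ memb a f2 ->
  actE a (Kb (f1, repl (a + 1) a f2)) = Kb (f1, f2).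
Proof.
move=> m2 n1 n2; apply: functional_extensionality => -[y1 y2].
rewrite actE_Kb /= (downop_none n1) upop_some ?memb_repl_new ?memb_repl_self //.
rewrite repl_K // Kb_eq xpair_eqE some_eq mul0r addr0.
by rewrite (eq_sym f2) andbC.
Qed.

Lemma relP m n (f1 : {ffun 'I_m -> int}) (f2 : {ffun 'I_n -> int}) a :
  memb (a + 1) f1 -> memb (a + 1) f2 -> ~~ memb a f1 -> ~~ memb a f2 ->
  actF a (Kb (repl (a + 1) a f1, f2)) =
  (fun y => Kb (f1, f2) y + qq ^ (KV a (repl (a + 1) a f1)) *
               Kb (repl (a + 1) a f1, repl (a + 1) a f2) y).
Proof.
move=> m1 m2 n1 n2; apply: functional_extensionality => -[y1 y2].
rewrite actF_Kb /= upop_some ?memb_repl_new ?memb_repl_self //.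
rewrite downop_some // repl_K // !Kb_eq !xpair_eqE !some_eq.
rewrite (eq_sym f1) (eq_sym (repl (a + 1) a f2)) andbC; congr (_ + _).
case: (y1 =P repl (a + 1) a f1) => [->|_]; first by rewrite andbT mulrC.
by rewrite andbF mul0r /= mulr0.
Qed.


Definition cnt m n (f : Zmn m n) := #|[pred p : 'I_m | memb (f.1 p) f.2]|.

Lemma cnt_V m n (f1 : {ffun 'I_m -> int}) (f2 : {ffun 'I_n -> int}) a :
  ~~ memb (a + 1) f2 -> ~~ memb a f2 -> cnt (repl (a + 1) a f1, f2) = cnt (f1, f2).
Proof.
move=> n1 n2; apply: eq_card => p; rewrite !inE /= repl_at.
case: eqP => [->|_]; by rewrite ?(negbTE n1) ?(negbTE n2).
Qed.

Lemma cnt_W m n (f1 : {ffun 'I_m -> int}) (f2 : {ffun 'I_n -> int}) a :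
  ~~ memb (a + 1) f1 -> ~~ memb a f1 -> cnt (f1, repl (a + 1) a f2) = cnt (f1, f2).
Proof.
move=> n1 n2; apply: eq_card => p; rewrite !inE /=.
by rewrite memb_repl_other //; apply: notmemb.
Qed.

Lemma cnt_P' m n (f1 : {ffun 'I_m -> int}) (f2 : {ffun 'I_n -> int}) a :
  ~~ memb a f1 -> ~~ memb a f2 ->
  cnt (repl (a + 1) a f1, repl (a + 1) a f2) = cnt (f1, f2).
Proof.
move=> n1 n2; apply: eq_card => p; rewrite !inE /= repl_at.
case: (f1 p =P a + 1) => [->|ne].
  by rewrite memb_repl eqxx andbT (negbTE n2) /= orbF.
by rewrite memb_repl_other //; [apply: notmemb | apply/eqP].
Qed.

Lemma cnt_P m n (f1 : {ffun 'I_m -> int}) (f2 : {ffun 'I_n -> int}) a :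
  memb (a + 1) f1 -> memb (a + 1) f2 -> ~~ memb a f2 ->
  (cnt (repl (a + 1) a f1, f2) < cnt (f1, f2))%N.
Proof.
case/membP=> p0 e0 m2 n2; apply: proper_card; apply/properP; split.
  apply/subsetP=> p; rewrite !inE /= repl_at.
  by case: eqP => [_|//]; rewrite (negbTE n2).
by exists p0; rewrite !inE /= ?repl_at e0 ?eqxx // (negbTE n2).
Qed.

Lemma Ssum_V m n (f1 : {ffun 'I_m -> int}) (f2 : {ffun 'I_n -> int}) a :
  inZplus (f1, f2) -> memb (a + 1) f1 -> Ssum (repl (a + 1) a f1, f2) = Ssum (f1, f2) - 1.
Proof. by move=> Z m1; rewrite (Ssum_repl1 _ Z m1); lia. Qed.

Lemma Ssum_W m n (f1 : {ffun 'I_m -> int}) (f2 : {ffun 'I_n -> int}) a :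
  inZplus (f1, f2) -> memb (a + 1) f2 -> Ssum (f1, repl (a + 1) a f2) = Ssum (f1, f2) - 1.
Proof. by move=> Z m1; rewrite (Ssum_repl2 _ Z m1); lia. Qed.

Lemma Ssum_P m n (f1 : {ffun 'I_m -> int}) (f2 : {ffun 'I_n -> int}) a :
  inZplus (f1, f2) -> memb (a + 1) f1 -> memb (a + 1) f2 -> ~~ memb a f2 ->
  Ssum (repl (a + 1) a f1, repl (a + 1) a f2) = Ssum (f1, f2) - 2.
Proof.
move=> Z m1 m2 n2; have Z2 := Zplus_replW Z n2.
rewrite (Ssum_V Z2 m1) (Ssum_W Z m2); lia.
Qed.

Lemma abs_le_sum k (s : {ffun 'I_k -> int}) p : `|s p| <= \sum_q `|s q|.
Proof.
rewrite (bigD1 p) //= lerDl; apply: sumr_ge0 => q _; exact: normr_ge0.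
Qed.


Definition occ m n (f : Zmn m n) x := memb x f.1 || memb x f.2.


Lemma memb_bound m n (f : Zmn m n) b : inZpp f -> memb b f.2 -> b <= n%:Z.
Proof. by case/andP=> _ /forallP B /membP [r <-]. Qed.

Lemma ar_ex (b : int) (k : nat) : b - 1 - k%:Z = (b - 1 - k.+1%:Z) + 1.
Proof. lia. Qed.
Lemma ar_ab (b : int) (k : nat) : (b - 1 - k.+1%:Z) + 1 < b.
Proof. lia. Qed.
Lemma ar_occ (b : int) (k j : nat) : (j < k)%N ->
  (b - 1 - j%:Z != b - 1 - k.+1%:Z) && (b - 1 - j%:Z != b - 1 - k.+1%:Z + 1).
Proof. move=> H; apply/andP; split; apply/eqP; lia. Qed.
Lemma ar_ne (a b : int) : a + 1 < b -> (b != a) && (b != a + 1).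
Proof. move=> H; apply/andP; split; apply/eqP; lia. Qed.
Lemma ar_N (a b N : int) : a + 1 < b -> b <= N -> (a + 1 != N) && (a != N).
Proof. move=> H H'; apply/andP; split; apply/eqP; lia. Qed.
Lemma ar_dd (sf sh sy N D : int) : sf - (sh + N) <= D -> sh - 1 <= sy -> (sf - 1) - (sy + N) <= D.
Proof. lia. Qed.
Lemma ar_dd2 (sf sh N D : int) : sf - (sh + N) <= D -> (sf - 2) - (sh + N) < D.
Proof. lia. Qed.
Lemma ar_contra (a b : int) : a + 1 < b -> b <= a + 1 -> False.
Proof. lia. Qed.

Section Main2.
Variables (m n : nat) (sig : {rmorphism Fq -> Fq})
  (psi1 : fsum m n.+1 -> fsum m n.+1) (psi0 : fsum m n -> fsum m n).
Hypothesis H1 : is_bar sig psi1.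
Hypothesis H0 : is_bar sig psi0.
Local Notation N := (n.+1)%:Z.
Local Notation XX := (X psi1 psi0).

Definition dd (f : Zmn m n.+1) (h : Zmn m n) : int := Ssum f - (Ssum h + N).

Lemma inner (c D : nat)
  (IHc : forall g, inZpp g -> (cnt g < c)%N -> forall h, XX g h = 0)
  (IHD : forall g, inZpp g -> cnt g = c -> forall h, dd g h < D%:Z -> XX g h = 0) :
  forall k (f : Zmn m n.+1) b, inZpp f -> cnt f = c -> memb b f.1 -> memb b f.2 ->
  (forall x, memb x f.1 -> memb x f.2 -> b <= x) ->
  ~~ occ f (b - 1 - k%:Z) -> (forall j : nat, (j < k)%N -> occ f (b - 1 - j%:Z)) ->
  forall h0, dd f h0 <= D%:Z -> XX f h0 = 0.
Proof.
elim=> [|k IHk] [f1 f2] b Zf cf mb1 mb2 minb nfree occs h0 hd /=.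
- set a := b - 1.
  have eb : b = a + 1 by rewrite /a subrK.
  rewrite eb in mb1 mb2.
  have [n1 n2] : ~~ memb a f1 /\ ~~ memb a f2.
    by move: nfree; rewrite /occ /= subr0 negb_or => /andP.
  have Zfp : inZplus (f1, f2) by case/andP: Zf.
  have Zg : inZpp (repl (a + 1) a f1, f2) by apply: Zpp_replV.
  have Zg' : inZpp (repl (a + 1) a f1, repl (a + 1) a f2).
    by apply: Zpp_replV => //; apply: Zpp_replW.
  have Zg'p : inZplus (repl (a + 1) a f1, repl (a + 1) a f2) by case/andP: Zg'.
  rewrite (X_pair H1 H0 h0 Zg Zfp Zg'p (relP mb1 mb2 n1 n2)).
  have cg : (cnt (repl (a + 1) a f1, f2) < c)%N by rewrite -cf; apply: cnt_P.
  rewrite actF_vanish; last 2 first.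
  + by move=> y; rewrite (IHc _ Zg cg) eqxx.
  + by move=> y _; rewrite (IHc _ Zg cg).
  rewrite (IHD _ Zg'); first by rewrite mulr0 subrr.
    by rewrite cnt_P'.
  move: hd; rewrite /dd (Ssum_P Zfp mb1 mb2 n2); exact: ar_dd2.
- set a := b - 1 - k.+1%:Z.
  have ex : b - 1 - k%:Z = a + 1 by rewrite /a ar_ex.
  have ox := occs k (ltnSn k); rewrite ex in ox.
  have [n1 n2] : ~~ memb a f1 /\ ~~ memb a f2.
    by move: nfree; rewrite /occ /= negb_or => /andP.
  have ab : a + 1 < b by rewrite /a ar_ab.
  have notat : ~~ (memb (a + 1) f1 && memb (a + 1) f2).
    by apply/negP => /andP [x1 x2]; apply: (ar_contra ab); apply: minb.
  have Zfp : inZplus (f1, f2) by case/andP: Zf.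
  have occs' (h : Zmn m n.+1) : (forall y, y != a -> y != a + 1 -> occ h y = occ (f1, f2) y) ->
      forall j : nat, (j < k)%N -> occ h (b - 1 - j%:Z).
    move=> E j lj; case/andP: (ar_occ b lj) => o1 o2.
    by rewrite E //; apply: occs; rewrite ltnS ltnW.
  case/orP: ox => [mx1|mx2].
  + have nx2 : ~~ memb (a + 1) f2 by move: notat; rewrite mx1.
    have Zh : inZpp (repl (a + 1) a f1, f2) by apply: Zpp_replV.
    rewrite (X_F H1 H0 h0 Zh (relV mx1 nx2 n1)).
    apply: actF_vanish => [y|y Hy]; first by move=> nz; apply: (X_supp H1 H0 Zh nz).
    apply: (IHk _ b Zh) => //=.
    * by rewrite cnt_V.
    * by case/andP: (ar_ne ab) => e3 e4; rewrite memb_repl_other.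
    * move=> x; rewrite memb_repl => /orP [/andP [_ /eqP ->]|/andP [x1 _]] x2.
        by move: x2; rewrite (negbTE n2).
      exact: minb.
    * by rewrite /occ /= ex memb_repl_self (negbTE nx2).
    * apply: occs' => z z1 z2; by rewrite /occ /= memb_repl_other.
    * move: hd Hy; rewrite /dd (Ssum_V Zfp mx1); exact: ar_dd.
  + have nx1 : ~~ memb (a + 1) f1 by move: notat; rewrite mx2 andbT.
    have Zh : inZpp (f1, repl (a + 1) a f2) by apply: Zpp_replW.
    have bN : b <= N by apply: (memb_bound Zf).
    case/andP: (ar_N ab bN) => e1 e2.
    rewrite (X_E H1 H0 h0 e1 e2 Zh (relW mx2 nx1 n2)).
    apply: actE_vanish => [y|y Hy]; first by move=> nz; apply: (X_supp H1 H0 Zh nz).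
    apply: (IHk _ b Zh) => //=.
    * by rewrite cnt_W.
    * by case/andP: (ar_ne ab) => e3 e4; rewrite memb_repl_other.
    * move=> x x1; rewrite memb_repl => /orP [/andP [_ /eqP E]|/andP [x2 _]].
        by move: x1; rewrite E (negbTE n1).
      exact: minb.
    * by rewrite /occ /= ex memb_repl_self (negbTE nx1).
    * apply: occs' => z z1 z2; by rewrite /occ /= memb_repl_other.
    * move: hd Hy; rewrite /dd (Ssum_W Zfp mx2); exact: ar_dd.
Qed.

End Main2.


Lemma ar_b (sf sh N : int) : sh + N <= sf -> sf - (sh + N) < 0 -> False.
Proof. lia. Qed.
Lemma ar_S (x : int) (D : nat) : x < (D.+1)%:Z -> x <= D%:Z.
Proof. lia. Qed.
Lemma ar_far (y b L : int) : 0 <= L -> `|y| <= L -> y = b - 1 - (`|b|%N + `|L|%N + 1)%N%:Z -> False.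
Proof. lia. Qed.
Lemma ar_lt (D : nat) (x : int) : x < (`|x|%N.+1)%:Z.
Proof. lia. Qed.

Section Main3.
Variables (m n : nat) (sig : {rmorphism Fq -> Fq})
  (psi1 : fsum m n.+1 -> fsum m n.+1) (psi0 : fsum m n -> fsum m n).
Hypothesis H1 : is_bar sig psi1.
Hypothesis H0 : is_bar sig psi0.
Local Notation N := (n.+1)%:Z.
Local Notation XX := (X psi1 psi0).

Lemma free_below (f : Zmn m n.+1) b : exists j : nat, ~~ occ f (b - 1 - j%:Z).
Proof.
set L := \sum_q `|f.1 q| + \sum_r `|f.2 r|.
have L0 : 0 <= L by apply: addr_ge0; apply: sumr_ge0 => q _; exact: normr_ge0.
exists (`|b|%N + `|L|%N + 1)%N; apply/negP; rewrite /occ => /orP [] /membP [q E].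
  apply: (ar_far L0 _ E); apply: le_trans (abs_le_sum _ q) _.
  by rewrite /L lerDl; apply: sumr_ge0 => r _; exact: normr_ge0.
apply: (ar_far L0 _ E); apply: le_trans (abs_le_sum _ q) _.
by rewrite /L lerDr; apply: sumr_ge0 => r _; exact: normr_ge0.
Qed.

Lemma mid (c : nat) (IHc : forall g, inZpp g -> (cnt g < c)%N -> forall h, XX g h = 0) :
  forall D : nat, forall f, inZpp f -> cnt f = c -> forall h0, dd f h0 < D%:Z -> XX f h0 = 0.
Proof.
elim=> [|D IHD] f Zf cf h0 hd.
  case: (XX f h0 =P 0) => // /eqP /(X_bound H1 H0 Zf) B.
  by case: (ar_b B hd).
have {}hd := ar_S hd.
case: (boolP [exists p, memb (f.1 p) f.2]) => [/existsP [p0 Hp0]|nex]; last first.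
  apply: (X_typ H1 H0 _ Zf); apply/forallP => p; apply/forallP => r; apply/negP => /eqP E.
  by case/negP: nex; apply/existsP; exists p; apply/membP; exists r.
have [p Pp maxp] := @arg_maxnP _ p0 (fun p => memb (f.1 p) f.2) (fun p => nat_of_ord p) Hp0.
set b := f.1 p.
have minb : forall x, memb x f.1 -> memb x f.2 -> b <= x.
  move=> x /membP [p' <-] mx; have le : (p' <= p)%N := maxp p' mx.
  move: le; rewrite leq_eqVlt => /orP [/eqP E|lt].
    by have -> : p' = p by apply: val_inj.
  case/andP: Zf => /andP [/forallP V _] _.
  by move/forallP: (V p') => /(_ p); rewrite lt /= => /ltW.
have exP := free_below f b.
case: (ex_minnP exP) => k Pk mink.
apply: (@inner m n sig psi1 psi0 H1 H0 c D IHc IHD k f b) => //.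
- by apply/membP; exists p.
- move=> j lj; apply/negPn/negP => Pj; have := mink j Pj.
  by rewrite leqNgt lj.
Qed.

Lemma allX (c : nat) : forall f, inZpp f -> cnt f = c -> forall h0, XX f h0 = 0.
Proof.
elim/ltn_ind: c => c IH f Zf cf h0.
apply: (@mid c _ (`|dd f h0|%N.+1) f Zf cf h0); last exact: ar_lt.
move=> g Zg cg h; exact: (IH _ cg g Zg erefl h).
Qed.

End Main3.


Unset Implicit Arguments.

Theorem proposition2p8 (m n : nat) (sig : {rmorphism Fq -> Fq})
    (psi1 : fsum m n.+1 -> fsum m n.+1) (psi0 : fsum m n -> fsum m n) :
  sig qq = qq^-1 ->
  is_bar sig psi1 -> is_bar sig psi0 ->
  forall u : fsum m n.+1, in_hatEp u ->
    in_hatEp (psi1 u) /\ trunc (psi1 u) = psi0 (trunc u).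
Proof.
move=> _ H1 H0 u [hu Zu].
have basis f : inZpp f -> forall h0, trunc (psi1 (Kb f)) h0 = psi0 (trunc (Kb f)) h0.
  move=> Zf h0; apply/eqP; rewrite -subr_eq0.
  by have := allX H1 H0 Zf (erefl (cnt f)) h0; rewrite /X => ->.
have u0 := zero_of_supp Zu.
case: (H1) => Hh1 [Hc1 _].
split.
  split; first exact: Hh1.
  move=> x nz; apply/negPn/negP => nZ; case/negP: nz.
  case: (Hc1 u hu x) => s [_ _ ->]; rewrite big1 // => f _.
  case: (boolP (inZpp f)) => [Zf|nf]; last by rewrite u0 // rmorph0 mul0r.
  case: (psi1 (Kb f) x =P 0) => [->|/eqP nz']; first by rewrite mulr0.
  by case/negP: nZ; exact: (psi1_Zpp H1 Zf nz').
apply: functional_extensionality => h0.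
rewrite {1}/trunc.
case: (Hc1 u hu (h0.1, ext h0.2 (n.+1)%:Z)) => s1 [us1 cs1 ->].
have E1 : \sum_(f <- s1) sig (u f) * psi1 (Kb f) (h0.1, ext h0.2 (n.+1)%:Z)
        = \sum_(f <- s1) sig (u f) * psi0 (trunc (Kb f)) h0.
  apply: eq_bigr => f _; case: (boolP (inZpp f)) => [Zf|nf]; last by rewrite u0 // rmorph0 !mul0r.
  congr (_ * _); exact: basis f Zf h0.
rewrite E1.
set S0 := map (fun f : Zmn m n.+1 => (f.1, restr f.2))
  (filter (fun f : Zmn m n.+1 => f.2 ord_max == (n.+1)%:Z) s1).
have uS0 : uniq S0.
  rewrite map_inj_in_uniq ?filter_uniq // => f g.
  rewrite !mem_filter => /andP [/eqP ef _] /andP [/eqP eg _] [E1' E2'].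
  case: f g ef eg E1' E2' => f1 f2 [g1 g2] /= ef eg -> E2'.
  by rewrite -(ext_restr f2) -(ext_restr g2) ef eg E2'.
rewrite (psi_expand H0 (trunc_hatE hu) uS0); last first.
  move=> f' nz.
  have nzu : u (f'.1, ext f'.2 (n.+1)%:Z) != 0.
    by apply/eqP => E; move: nz; rewrite /trunc E rmorph0 mul0r eqxx.
  have ZF := Zu _ nzu.
  have EK : psi0 (Kb f') h0 = psi1 (Kb (f'.1, ext f'.2 (n.+1)%:Z)) (h0.1, ext h0.2 (n.+1)%:Z).
    have := basis _ ZF h0; rewrite trunc_Kb /= ext_max eqxx restr_ext -surjective_pairing.
    by move=> <-.
  apply/mapP; exists (f'.1, ext f'.2 (n.+1)%:Z); last by rewrite /= restr_ext -surjective_pairing.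
  rewrite mem_filter /= ext_max eqxx /=; apply: cs1; move: nz; by rewrite EK /trunc.
rewrite big_map big_filter [RHS]big_mkcond; apply: eq_bigr => f _.
case: ifP => [/eqP ef|nf].
  rewrite trunc_Kb ef eqxx /trunc.
  have -> : (f.1, ext (restr f.2) (n.+1)%:Z) = f.
    by rewrite -ef ext_restr -surjective_pairing.
  by [].
by rewrite trunc_Kb nf (psi_zero H0) mulr0.
Qed.
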